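(* Consider a planar multiple linear antenna array consisting of $M$ linear sub-arrays. Sub-array $m$ ($m=1,\dots,M$) has $N_m$ elements, with inter-element spacing $d_m>0$, and its $n$-th element ($n=1,\dots,N_m$) is located at $(x_{m,1}+(n-1)d_m,\; y_{m,1})$, where the leading element of the first sub-array is at the origin, $(x_{1,1},y_{1,1})=(0,0)$. For a complex weight vector $\mathbf w=(w_{m,n})$ (not identically zero), the beam pattern is $$f_{\mathbf w}(\theta)=\frac{1}{\sum_{m=1}^{M}\sum_{n=1}^{N_m}|w_{m,n}|}\sum_{m=1}^{M} e^{j2\pi(x_{m,1}\sin\theta+y_{m,1}\cos\theta)/\lambda}\sum_{n=1}^{N_m} w_{m,n}\,e^{j2\pi(n-1)d_m\sin\theta/\lambda},$$ where $\lambda>0$ is the wavelength. Let $\theta$ be an angle and $\mathfrak M(\theta)$ an angle with $\mathfrak M(\theta)\neq\theta$. Then $f_{\mathbf w}(\theta)=f_{\mathbf w}(\mathfrak M(\theta))$ holds for every weight vector $\mathbf w$ (i.e. the beam pattern is periodic at $\theta$ with period mapping $\mathfrak M$) if and only if both of the following hold: (C1) for every $i=1,\dots,M$, $\dfrac{d_i\left(\sin\theta-\sin(\mathfrak M(\theta))\right)}{\lambda}\in\mathbb Z\setminus\{0\}$; (C2) for every $l=2,\dots,M$, $\dfrac{x_{l,1}\left(\sin\theta-\sin(\mathfrak M(\theta))\right)+y_{l,1}\left(\cos\theta-\cos(\mathfrak M(\theta))\right)}{\lambda}\in\mathbb Z$.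
   Context: Angles $\theta$ parametrize far-field directions in the plane via the unit vector $(\sin\theta,\cos\theta)$. Definition (principle of grating lobes): the beam pattern $f_{\mathbf w}(\cdot)$ is called periodic (on an angular interval) if there is a mapping $\mathfrak M$ with $\mathfrak M(\theta)\neq\theta$ and $f_{\mathbf w}(\theta)=f_{\mathbf w}(\mathfrak M(\theta))$ for every weight vector $\mathbf w$ and every $\theta$ in the interval; $\mathfrak M$ is called the period mapping. If the absolute radiation maxima occur within the interval, the pattern is said to exhibit grating lobes. *)

(* Defs.v *)
From Stdlib Require Import Reals List.
From Coquelicot Require Import Coquelicot.
Open Scope R_scope.

Definition sumC (l : list nat) (f : nat -> C) : C :=
  fold_right (fun i acc => Cplus (f i) acc) (RtoC 0) l.
Definition sumR (l : list nat) (f : nat -> R) : R :=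
  fold_right (fun i acc => f i + acc) 0 l.

Definition cis (phi : R) : C := (cos phi, sin phi).

(* Sub-arrays indexed m = 1..M, elements n = 1..N m (1-based, as in the paper).
   x m, y m are the coordinates (x_{m,1}, y_{m,1}) of the leading element of
   sub-array m; d m is its inter-element spacing; lam the wavelength. *)
Definition beam (M : nat) (N : nat -> nat) (d x y : nat -> R) (lam : R)
  (w : nat -> nat -> C) (th : R) : C :=
  Cmult
    (Cinv (RtoC (sumR (seq 1 M) (fun m => sumR (seq 1 (N m)) (fun n => Cmod (w m n))))))
    (sumC (seq 1 M) (fun m =>
       Cmult (cis (2 * PI * (x m * sin th + y m * cos th) / lam))
             (sumC (seq 1 (N m)) (fun n =>
                Cmult (w m n) (cis (2 * PI * (INR n - 1) * d m * sin th / lam)))))).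

Definition nonzero_weights (M : nat) (N : nat -> nat) (w : nat -> nat -> C) : Prop :=
  exists m n, (1 <= m <= M)%nat /\ (1 <= n <= N m)%nat /\ w m n <> RtoC 0.

(* Main.v *)
Require Import Defs.
From Stdlib Require Import Reals ZArith List Lra Lia.
From Coquelicot Require Import Coquelicot.
Open Scope R_scope.

Lemma cis_mult a b : Cmult (cis a) (cis b) = cis (a + b).
Proof. unfold Cmult, cis; simpl; rewrite cos_plus, sin_plus; f_equal; ring. Qed.

Lemma sin_kPI_2 (k : Z) : sin (2 * PI * IZR k) = 0 /\ cos (2 * PI * IZR k) = 1.
Proof.
  assert (H : sin (PI * IZR k) = 0) by (apply sin_eq_0_1; exists k; ring).
  split.
  - apply sin_eq_0_1; exists (2 * k)%Z; rewrite mult_IZR; ring.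
  - replace (2 * PI * IZR k) with (2 * (PI * IZR k)) by ring.
    rewrite cos_2a_sin, H; ring.
Qed.

Lemma cis_eq a b (k : Z) : a - b = 2 * PI * IZR k -> cis a = cis b.
Proof.
  intros H. replace a with (b + 2 * PI * IZR k) by lra.
  destruct (sin_kPI_2 k) as [S Co].
  unfold cis; rewrite cos_plus, sin_plus, S, Co; f_equal; ring.
Qed.

Lemma cis_eq_inv a b : cis a = cis b -> exists k : Z, a - b = 2 * PI * IZR k.
Proof.
  unfold cis; intros E; injection E; intros Es Ec.
  assert (C1 : cos (a - b) = 1).
  { rewrite cos_minus, Es, Ec. rewrite <- (sin2_cos2 b). unfold Rsqr; ring. }
  replace (a - b) with (2 * ((a - b) / 2)) in C1 by field.
  rewrite cos_2a_sin in C1.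
  assert (S0 : sin ((a - b) / 2) = 0) by nra.
  destruct (sin_eq_0_0 _ S0) as [k Hk]. exists k. lra.
Qed.

Lemma sumC_ext l f g : (forall i, In i l -> f i = g i) -> sumC l f = sumC l g.
Proof.
  induction l as [|a l IH]; intros H; simpl; auto.
  rewrite H; [|left; auto]. rewrite IH; auto. intros; apply H; right; auto.
Qed.

Lemma sumC_zero l f : (forall i, In i l -> f i = RtoC 0) -> sumC l f = RtoC 0.
Proof.
  induction l as [|a l IH]; intros H; simpl; auto.
  rewrite H; [|left; auto]. rewrite IH; [apply Cplus_0_l|]. intros; apply H; right; auto.
Qed.

Lemma sumR_zero l f : (forall i, In i l -> f i = 0) -> sumR l f = 0.
Proof.
  induction l as [|a l IH]; intros H; simpl; auto.
  rewrite H; [|left; auto]. rewrite IH; [ring|]. intros; apply H; right; auto.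
Qed.

Lemma sumC_single l f i0 : NoDup l -> In i0 l ->
  (forall i, In i l -> i <> i0 -> f i = RtoC 0) -> sumC l f = f i0.
Proof.
  induction l as [|a l IH]; intros ND Hi H; [destruct Hi|].
  inversion ND; subst. simpl.
  destruct (Nat.eq_dec a i0) as [->|ne].
  - rewrite sumC_zero; [apply Cplus_0_r|].
    intros i Hi' ; apply H; [right; auto|]. intros ->; contradiction.
  - rewrite H; [|left; auto|auto]. destruct Hi as [Hi|Hi]; [contradiction|].
    rewrite IH; auto; [apply Cplus_0_l|]. intros; apply H; auto; right; auto.
Qed.

Lemma sumR_single l f i0 : NoDup l -> In i0 l ->
  (forall i, In i l -> i <> i0 -> f i = 0) -> sumR l f = f i0.
Proof.
  induction l as [|a l IH]; intros ND Hi H; [destruct Hi|].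
  inversion ND; subst. simpl.
  destruct (Nat.eq_dec a i0) as [->|ne].
  - rewrite sumR_zero; [ring|].
    intros i Hi' ; apply H; [right; auto|]. intros ->; contradiction.
  - rewrite H; [|left; auto|auto]. destruct Hi as [Hi|Hi]; [contradiction|].
    rewrite IH; auto; [ring|]. intros; apply H; auto; right; auto.
Qed.

Definition w0 (m0 n0 : nat) : nat -> nat -> C :=
  fun m n => if andb (Nat.eqb m m0) (Nat.eqb n n0) then RtoC 1 else RtoC 0.

Lemma beam_single M N d x y lam m0 n0 t :
  (1 <= m0 <= M)%nat -> (1 <= n0 <= N m0)%nat ->
  beam M N d x y lam (w0 m0 n0) t =
  cis (2 * PI * (x m0 * sin t + y m0 * cos t) / lam
       + 2 * PI * (INR n0 - 1) * d m0 * sin t / lam).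
Proof.
  intros Hm Hn. unfold beam.
  rewrite (sumR_single (seq 1 M) _ m0); [| apply seq_NoDup | apply in_seq; lia |].
  2:{ intros i _ ne. apply sumR_zero. intros n _. unfold w0.
      rewrite (proj2 (Nat.eqb_neq i m0) ne). apply Cmod_0. }
  rewrite (sumR_single (seq 1 (N m0)) _ n0); [| apply seq_NoDup | apply in_seq; lia |].
  2:{ intros i _ ne. unfold w0.
      rewrite Nat.eqb_refl, (proj2 (Nat.eqb_neq i n0) ne). apply Cmod_0. }
  unfold w0 at 1; rewrite !Nat.eqb_refl; simpl andb; cbv iota; rewrite Cmod_1.
  rewrite (sumC_single (seq 1 M) _ m0); [| apply seq_NoDup | apply in_seq; lia |].
  2:{ intros i _ ne. rewrite sumC_zero; [apply Cmult_0_r|]. intros n _. unfold w0.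
      rewrite (proj2 (Nat.eqb_neq i m0) ne). apply Cmult_0_l. }
  rewrite (sumC_single (seq 1 (N m0)) _ n0); [| apply seq_NoDup | apply in_seq; lia |].
  2:{ intros i _ ne. unfold w0.
      rewrite Nat.eqb_refl, (proj2 (Nat.eqb_neq i n0) ne). apply Cmult_0_l. }
  unfold w0; rewrite !Nat.eqb_refl; simpl andb.
  rewrite Cmult_1_l, cis_mult.
  replace (Cinv (RtoC 1)) with (RtoC 1).
  2:{ unfold Cinv, RtoC; simpl; f_equal; field. }
  apply Cmult_1_l.
Qed.

Theorem theorem1 (M : nat) (N : nat -> nat) (d x y : nat -> R) (lam th th' : R) :
  (1 <= M)%nat ->
  (forall m, (1 <= m <= M)%nat -> (2 <= N m)%nat) ->
  (forall m, (1 <= m <= M)%nat -> 0 < d m) ->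
  x 1%nat = 0 -> y 1%nat = 0 ->
  0 < lam ->
  - (PI / 2) <= th <= PI / 2 ->
  - (PI / 2) <= th' <= PI / 2 ->
  th' <> th ->
  ((forall w : nat -> nat -> C, nonzero_weights M N w ->
      beam M N d x y lam w th = beam M N d x y lam w th')
   <->
   ((forall i, (1 <= i <= M)%nat ->
       exists k : Z, k <> 0%Z /\ d i * (sin th - sin th') / lam = IZR k) /\
    (forall l, (2 <= l <= M)%nat ->
       exists k : Z,
         (x l * (sin th - sin th') + y l * (cos th - cos th')) / lam = IZR k))).
Proof.
  intros HM HN Hd Hx Hy Hlam Hth Hth' Hne.
  assert (PIpos := PI_RGT_0).
  split.
  - intros H.
    assert (P : forall m n, (1 <= m <= M)%nat -> (1 <= n <= N m)%nat ->
      exists k : Z, (x m * (sin th - sin th') + y m * (cos th - cos th')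
                     + (INR n - 1) * d m * (sin th - sin th')) / lam = IZR k).
    { intros m n Hm Hn.
      assert (E := H (w0 m n) ltac:(exists m, n; split; [auto|split; [auto|]];
                 unfold w0; rewrite !Nat.eqb_refl; simpl; intros E; injection E; lra)).
      rewrite !beam_single in E by auto.
      destruct (cis_eq_inv _ _ E) as [k Hk]. exists k.
      apply (Rmult_eq_reg_l (2 * PI)); [|lra].
      rewrite <- Hk. field. lra. }
    split.
    + intros i Hi.
      destruct (P i 1%nat Hi ltac:(specialize (HN i Hi); lia)) as [k1 H1].
      destruct (P i 2%nat Hi ltac:(specialize (HN i Hi); lia)) as [k2 H2].
      exists (k2 - k1)%Z. simpl INR in H1, H2.
      assert (Eq : d i * (sin th - sin th') / lam = IZR (k2 - k1)).
      { rewrite minus_IZR, <- H1, <- H2. field. lra. }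
      split; auto. intros Z0. rewrite Z0 in Eq. simpl in Eq.
      assert (sin th - sin th' = 0).
      { specialize (Hd i Hi).
        apply (Rmult_eq_reg_l (d i / lam)). 2:{ apply Rgt_not_eq, Rdiv_lt_0_compat; lra. }
        rewrite Rmult_0_r, <- Eq. field. lra. }
      apply Hne. symmetry. apply sin_inj; auto. lra.
    + intros l Hl.
      destruct (P l 1%nat ltac:(lia) ltac:(specialize (HN l ltac:(lia)); lia)) as [k1 H1].
      exists k1. rewrite <- H1. simpl INR. field. lra.
  - intros [C1 C2] w _. unfold beam. f_equal.
    apply sumC_ext. intros m Hm. apply in_seq in Hm.
    assert (Hm' : (1 <= m <= M)%nat) by lia.
    f_equal.
    + assert (K : exists k : Z,
        (x m * (sin th - sin th') + y m * (cos th - cos th')) / lam = IZR k).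
      { destruct (Nat.eq_dec m 1) as [->|ne].
        - exists 0%Z. rewrite Hx, Hy. simpl. field. lra.
        - apply C2. lia. }
      destruct K as [k Hk]. apply (cis_eq _ _ k). rewrite <- Hk. field. lra.
    + apply sumC_ext. intros n Hn. apply in_seq in Hn. f_equal.
      destruct (C1 m Hm') as [k [_ Hk]].
      apply (cis_eq _ _ ((Z.of_nat n - 1) * k)%Z).
      rewrite mult_IZR, minus_IZR, <- INR_IZR_INZ, <- Hk. field. lra.
Qed.
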